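(* Let $(V,\mu)$ be an infinite, connected, locally finite weighted graph, let $1<s<\infty$, and let $\sigma\in\ell^+(V)$ satisfy $G\sigma(x)<\infty$ for every $x\in V$. Then for all $x\in V$, $$[G\sigma(x)]^s\le s\,G\big[(G\sigma)^{s-1}\sigma\big](x).$$
   Context: Weighted graph: $\mu_{xy}=\mu_{yx}\ge0$, $\mu_{xy}>0$ iff $x\sim y$, $\mu(x)=\sum_{y\sim x}\mu_{xy}$. Random walk $P(x,y)=\mu_{xy}/\mu(x)$, $P_n(x,y)=\mathbb P_x[X_n=y]$, Green function $g(x,y)=\sum_{n\ge0}P_n(x,y)/\mu(y)\in(0,\infty]$, Green operator $Gf(x)=\sum_{y\in V}g(x,y)f(y)\mu(y)$. *)

(* Defs.v *)
From HB Require Import structures.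
From mathcomp Require Import all_boot all_order all_algebra.
From mathcomp Require Import all_classical all_reals all_analysis.
From Stdlib Require Import Relations.
Set Implicit Arguments. Unset Strict Implicit. Unset Printing Implicit Defensive.
Import Order.TTheory GRing.Theory Num.Theory.
Local Open Scope classical_set_scope.
Local Open Scope ring_scope.

Section WeightedGraph.
Variables (R : realType) (V : choiceType) (mu : V -> V -> R).

Definition adj (x y : V) : Prop := 0 < mu x y.

Definition is_weighted_graph : Prop :=
  (forall x y, mu x y = mu y x) /\ (forall x y, 0 <= mu x y).

Definition locally_finite : Prop := forall x, finite_set [set y | adj x y].

Definition connected_graph : Prop := forall x y, clos_refl_trans V adj x y.

Definition infinite_graph : Prop := infinite_set [set: V].

Definition muv (x : V) : R := \sum_(y \in [set y | adj x y]) mu x y.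

Definition Ptr (x y : V) : R := mu x y / muv x.

Fixpoint Pn (n : nat) (x y : V) : \bar R :=
  match n with
  | 0 => (if x == y then 1 else 0)%:E
  | n'.+1 => \esum_(z in [set: V]) ((Ptr x z)%:E * Pn n' z y)%E
  end.

Definition green (x y : V) : \bar R :=
  \esum_(n in [set: nat]) (Pn n x y * ((muv y)^-1)%:E)%E.

Definition Gop (f : V -> R) (x : V) : \bar R :=
  \esum_(y in [set: V]) (green x y * (f y * muv y)%:E)%E.

End WeightedGraph.

(* Main.v *)
Require Import Defs.
From HB Require Import structures.
From mathcomp Require Import all_boot all_order all_algebra.
From mathcomp Require Import all_classical all_reals all_analysis.
From mathcomp Require Import finmap ring lra.
Import Order.TTheory GRing.Theory Num.Theory.
Local Open Scope classical_set_scope.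
Local Open Scope ring_scope.

Section Aux.
Variable R : realType.

Lemma esumZl_ge0 (T : choiceType) (S : set T) (r : R) (a : T -> \bar R) :
  0 <= r -> (forall i, (0 <= a i)%E) ->
  (\esum_(i in S) (r%:E * a i) = r%:E * \esum_(i in S) a i)%E.
Proof.
move=> r0 a0; rewrite /esum -ereal_supZl //; last first.
  apply/set0P; exists (\sum_(x \in set0) a x)%E; exists set0 => //.
  exact: fsets_set0.
congr ereal_sup; apply/seteqP; split => [_ /= [X XS <-]|_ /= [_ [Y YS <-] <-]].
- exists (\sum_(x \in X) a x)%E; first by exists X.
  by rewrite ge0_mule_fsumr.
- by exists Y => //; rewrite ge0_mule_fsumr.
Qed.

Lemma esum_swap (T1 T2 : choiceType) (a : T1 -> T2 -> \bar R) :
  (forall i j, (0 <= a i j)%E) ->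
  \esum_(i in [set: T1]) \esum_(j in [set: T2]) a i j =
  \esum_(j in [set: T2]) \esum_(i in [set: T1]) a i j.
Proof.
move=> a0; rewrite !esum_esum //.
rewrite (reindex_esum ([set: T2] `*`` (fun=> [set: T1]))
   ([set: T1] `*`` (fun=> [set: T2])) (fun x => (x.2, x.1))) //.
split.
- by move=> [i j] _.
- by move=> [i1 i2] [j1 j2] /= _ _ [] -> ->.
- by move=> [i1 i2] _ /=; exists (i2, i1).
Qed.

Lemma esum_nat_le (a : nat -> \bar R) M : (forall n, (0 <= a n)%E) ->
  (forall N, (\sum_(n < N) a n <= M)%E) -> (\esum_(n in [set: nat]) a n <= M)%E.
Proof.
move=> a0 H; rewrite /esum; apply: ge_ereal_sup => _ [X [finX _] <-].
rewrite fsbig_finite //=; set F := fset_set X.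
pose n := (\max_(k <- finmap.enum_fset F) k).+1.
apply: le_trans (lee_sum_fset_nat F n xpredT _ _) _ => //.
  move=> k /= kF; rewrite /n big_seq_fsetE/=.
  by rewrite -[k]/(val [`kF]%fset) ltnS leq_bigmax.
by rewrite big_mkord.
Qed.

Lemma esum_nat_ge (a : nat -> \bar R) N : (forall n, (0 <= a n)%E) ->
  (\sum_(n < N) a n <= \esum_(n in [set: nat]) a n)%E.
Proof.
move=> a0; rewrite -nneseries_esumT// -(big_mkord xpredT).
exact: nneseries_lim_ge.
Qed.

Lemma tangent_powR (s a b : R) : 1 < s -> 0 <= a -> 0 <= b ->
  s * (a `^ (s - 1) * b) <= b `^ s + (s - 1) * a `^ s.
Proof.
move=> s1 a0 b0.
have s0 : 0 < s by apply: lt_trans s1.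
have s10 : 0 < s - 1 by rewrite subr_gt0.
pose p := s / (s - 1).
have p0 : 0 < p by rewrite divr_gt0.
have pq : p^-1 + s^-1 = 1.
  by rewrite /p invf_div; field; rewrite ?gt_eqF.
have := conjugate_powR (powR_ge0 a (s - 1)) b0 p0 s0 pq.
rewrite -powRrM.
have -> : (s - 1) * p = s by rewrite /p; field; rewrite gt_eqF.
move=> H; apply: le_trans (ler_wpM2l (ltW s0) H) _.
rewrite le_eqVlt; apply/orP; left; apply/eqP.
rewrite /p; field; rewrite ?gt_eqF //.
Qed.
End Aux.

Lemma step_ineq (R : realType) (T : Type) (s c0 : R) (l : seq T) (p v : T -> R) :
  1 < s -> 0 <= c0 -> (forall z, 0 <= p z) -> (forall z, 0 <= v z) ->
  \sum_(z <- l) p z <= 1 ->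
  (c0 + \sum_(z <- l) p z * v z) `^ s <=
    s * ((c0 + \sum_(z <- l) p z * v z) `^ (s-1) * c0) + \sum_(z <- l) p z * v z `^ s.
Proof.
move=> s1 c00 p0 v0 Q1.
set m := \sum_(z <- l) p z * v z.
set A := c0 + m.
have m0 : 0 <= m by rewrite sumr_ge0 // => z _; rewrite mulr_ge0.
have A0 : 0 <= A by rewrite addr_ge0.
have s0 : 0 < s by apply: lt_trans s1.
set X := A `^ s; set Y := A `^ (s - 1).
set K := \sum_(z <- l) p z * v z `^ s.
set Q := \sum_(z <- l) p z.
have h1 : s * Y * m <= K + (s - 1) * X * Q.
  rewrite /m /K /Q mulr_sumr mulr_sumr -big_split /=.
  apply: ler_sum => z _.
  have := @tangent_powR R s A (v z) s1 A0 (v0 z).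
  move=> /(ler_wpM2l (p0 z)).
  rewrite -/Y -/X => H; apply: le_trans _ (le_trans H _).
    by rewrite le_eqVlt; apply/orP; left; apply/eqP; ring.
  by rewrite le_eqVlt; apply/orP; left; apply/eqP; ring.
have h2 : X = Y * A by rewrite /X /Y mulrC mulr_powRB1.
have X0 : 0 <= X by rewrite powR_ge0.
have h3 : (s - 1) * X * Q <= (s - 1) * X.
  by rewrite ler_piMr // mulr_ge0 // subr_ge0 ltW.
have Y0 : 0 <= Y by rewrite powR_ge0.
rewrite -/X -/Y.
have h4 : s * X = s * (Y * c0) + s * Y * m by rewrite h2 /A; ring.
nra.
Qed.

Section G.
Variables (R : realType) (V : choiceType) (mu : V -> V -> R).
Hypothesis hgraph : is_weighted_graph mu.
Hypothesis hlf : locally_finite mu.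

Definition Nx (x : V) := [set y | adj mu x y].
Definition ls (x : V) : seq V := finmap.enum_fset (fset_set (Nx x)).

Lemma mu_ge0 x y : 0 <= mu x y.
Proof. by case: hgraph. Qed.

Lemma mu0 x y : ~ adj mu x y -> mu x y = 0.
Proof.
rewrite /adj => H; apply/eqP; rewrite eq_le mu_ge0 andbT leNgt.
by apply/negP.
Qed.

Lemma muvE x : muv mu x = \sum_(z <- ls x) mu x z.
Proof. by rewrite /muv fsbig_finite //; exact: hlf. Qed.

Lemma muv_ge0 x : 0 <= muv mu x.
Proof. by rewrite muvE sumr_ge0 // => z _; apply: mu_ge0. Qed.

Lemma Ptr_ge0 x y : 0 <= Ptr mu x y.
Proof. by rewrite /Ptr divr_ge0 // ?mu_ge0 ?muv_ge0. Qed.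

Lemma Ptr0 x y : ~ adj mu x y -> Ptr mu x y = 0.
Proof. by move=> /mu0; rewrite /Ptr => ->; rewrite mul0r. Qed.

Lemma sumPtr x : \sum_(z <- ls x) Ptr mu x z <= 1.
Proof.
rewrite /Ptr -mulr_suml -muvE.
have [->|h] := eqVneq (muv mu x) 0; first by rewrite mul0r.
by rewrite mulfV.
Qed.

Local Open Scope ereal_scope.

Lemma esumP x (h : V -> \bar R) : (forall z, 0 <= h z) ->
  \esum_(z in [set: V]) ((Ptr mu x z)%:E * h z) =
  \sum_(z <- ls x) (Ptr mu x z)%:E * h z.
Proof.
move=> h0.
have -> : \esum_(z in [set: V]) ((Ptr mu x z)%:E * h z) =
          \esum_(z in Nx x) ((Ptr mu x z)%:E * h z).
  rewrite [RHS]esum_mkcond; apply: eq_esum => z _.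
  case: ifPn => // /negP zN.
  rewrite Ptr0 ?mul0e //; move=> hz; apply: zN; exact: mem_set.
rewrite esum_fset; last by move=> i _; rewrite mule_ge0 // lee_fin Ptr_ge0.
  rewrite fsbig_finite. reflexivity. exact: hlf. exact: hlf.
Qed.

Lemma Pn_ge0 n x y : 0 <= Pn mu n x y.
Proof.
elim: n x => [|n IH] x /=; first by case: ifP.
by apply: esum_ge0 => z _; rewrite mule_ge0 // lee_fin Ptr_ge0.
Qed.

Lemma PnS n x y : Pn mu n.+1 x y = \sum_(z <- ls x) (Ptr mu x z)%:E * Pn mu n z y.
Proof. by rewrite /= esumP // => z; apply: Pn_ge0. Qed.

Definition A n (g : V -> \bar R) x := \esum_(y in [set: V]) (Pn mu n x y * g y).

Lemma A0 g x : (forall y, 0 <= g y) -> A 0 g x = g x.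
Proof.
move=> g0; rewrite /A.
have -> : \esum_(y in [set: V]) (Pn mu 0 x y * g y) =
          \esum_(y in [set x]) (Pn mu 0 x y * g y).
  rewrite [RHS]esum_mkcond; apply: eq_esum => y _.
  case: ifPn => // /negP yN /=.
  case: eqP => [xy|_]; last by rewrite mul0e.
  by exfalso; apply: yN; apply: mem_set.
by rewrite esum_set1 /= ?eqxx ?mul1e // mule_ge0 // Pn_ge0.
Qed.

Lemma AS n g x : (forall y, 0 <= g y) ->
  A n.+1 g x = \sum_(z <- ls x) (Ptr mu x z)%:E * A n g z.
Proof.
move=> g0; rewrite /A.
have E y : Pn mu n.+1 x y * g y =
    \sum_(z <- ls x) ((Ptr mu x z)%:E * Pn mu n z y * g y).
  rewrite PnS ge0_sume_distrl // => z _.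
  by rewrite mule_ge0 // ?lee_fin ?Ptr_ge0 ?Pn_ge0.
rewrite (eq_esum (fun y _ => E y)).
rewrite esum_sum; last first.
  by move=> y z _ _; rewrite !mule_ge0 // ?lee_fin ?Ptr_ge0 ?Pn_ge0.
apply: eq_bigr => z _; rewrite -esumZl_ge0 ?Ptr_ge0 //; last first.
  by move=> y; rewrite mule_ge0 // Pn_ge0.
by apply: eq_esum => y _; rewrite muleA.
Qed.

Lemma A_ge0 n g x : (forall y, 0 <= g y) -> 0 <= A n g x.
Proof. by move=> g0; apply: esum_ge0 => y _; rewrite mule_ge0 // Pn_ge0. Qed.

Definition cv (y : V) : R := ((muv mu y)^-1 * muv mu y)%R.

Lemma cv_ge0 y : (0 <= cv y)%R.
Proof. by rewrite /cv mulr_ge0 // ?invr_ge0 muv_ge0. Qed.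

Lemma GopE (g : V -> R) x : (forall y, 0 <= g y)%R ->
  Gop mu g x = \esum_(n in [set: nat]) A n (fun y => (g y * cv y)%:E) x.
Proof.
move=> g0; rewrite /Gop /green /A.
transitivity (\esum_(y in [set: V]) \esum_(n in [set: nat])
   (Pn mu n x y * (g y * cv y)%:E)); last first.
  apply: (@esum_swap R V nat (fun y n => Pn mu n x y * (g y * cv y)%:E)).
  by move=> y n; rewrite mule_ge0 // ?Pn_ge0 // lee_fin mulr_ge0 // cv_ge0.
apply: eq_esum => y _.
rewrite muleC -esumZl_ge0 //; last 2 first.
- by rewrite mulr_ge0 // muv_ge0.
- by move=> n; rewrite mule_ge0 // ?Pn_ge0 // lee_fin invr_ge0 muv_ge0.
apply: eq_esum => n _.
rewrite muleC -muleA -EFinM; congr (_ * _%:E).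
by rewrite /cv; ring.
Qed.


Definition S (g : V -> \bar R) N x := \sum_(n < N) A n g x.

Lemma S_ge0 g N x : (forall y, 0 <= g y) -> 0 <= S g N x.
Proof. by move=> g0; rewrite /S sume_ge0 // => n _; apply: A_ge0. Qed.

Lemma S_rec g N x : (forall y, 0 <= g y) ->
  S g N.+1 x = g x + \sum_(z <- ls x) (Ptr mu x z)%:E * S g N z.
Proof.
move=> g0; rewrite /S big_ord_recl A0 //; congr (_ + _).
rewrite (eq_bigr (fun i : 'I_N => \sum_(z <- ls x) (Ptr mu x z)%:E * A i g z)); last first.
  by move=> i _; rewrite lift0 AS.
rewrite exchange_big /=; apply: eq_bigr => z _.
rewrite ge0_sume_distrr // => i _; exact: A_ge0.
Qed.


Lemma main_ineq (s : R) (hs : (1 < s)%R) (sigma : V -> R)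
  (hsig : forall x, (0 <= sigma x)%R)
  (hfin : forall x, Gop mu sigma x < +oo) (x : V) :
  ((fine (Gop mu sigma x)) `^ s)%R%:E
     <= s%:E * Gop mu (fun y => ((fine (Gop mu sigma y)) `^ (s - 1) * sigma y)%R) x.
Proof.
have s0 : (0 < s)%R by apply: lt_trans hs.
pose sg y := (sigma y * cv y)%R.
have sg0 y : (0 <= sg y)%R by rewrite mulr_ge0 // cv_ge0.
pose sgE y := (sg y)%:E.
have sgE0 y : 0 <= sgE y by rewrite lee_fin.
have GE y : Gop mu sigma y = \esum_(n in [set: nat]) A n sgE y by rewrite GopE.
have G0 y : 0 <= Gop mu sigma y.
  by rewrite GE; apply: esum_ge0 => n _; apply: A_ge0.
have Gfin y : Gop mu sigma y \is a fin_num.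
  by rewrite ge0_fin_numE // hfin.
pose u y := fine (Gop mu sigma y).
have uE y : (u y)%:E = Gop mu sigma y by rewrite fineK.
have u0 y : (0 <= u y)%R by rewrite -lee_fin uE.
have SleG N y : S sgE N y <= Gop mu sigma y.
  by rewrite GE; apply: esum_nat_ge => n; apply: A_ge0.
have Sfin N y : S sgE N y \is a fin_num.
  rewrite ge0_fin_numE ?S_ge0 //; apply: le_lt_trans (SleG N y) _; exact: hfin.
pose uN N y := fine (S sgE N y).
have uNE N y : (uN N y)%:E = S sgE N y by rewrite fineK.
have uN0 N y : (0 <= uN N y)%R by rewrite -lee_fin uNE S_ge0.
have uNu N y : (uN N y <= u y)%R by rewrite -lee_fin uNE uE.
have uNrec N y : uN N.+1 y = (sg y + \sum_(z <- ls y) Ptr mu y z * uN N z)%R.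
  apply: EFin_inj; rewrite uNE S_rec // EFinD -sumEFin; congr (_ + _).
  by apply: eq_bigr => z _; rewrite -uNE -!EFinM.
pose F y := ((u y) `^ (s - 1) * sg y)%:E.
have F0 y : 0 <= F y by rewrite lee_fin mulr_ge0 // powR_ge0.
have claim N y : ((uN N y) `^ s)%:E <= s%:E * S F N y.
  elim: N y => [|N IH] y.
    by rewrite /uN /S !big_ord0 /= powR0 ?gt_eqF // mule0.
  have H := @step_ineq R V s (sg y) (ls y) (Ptr mu y) (uN N) hs (sg0 y)
     (fun z => Ptr_ge0 y z) (uN0 N) (sumPtr y).
  have Ha : ((uN N.+1 y) `^ (s - 1) <= u y `^ (s - 1))%R.
    apply: (ge0_ler_powR (r := s - 1)); last exact: uNu.
    - by rewrite subr_ge0 ltW.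
    - by rewrite nnegrE.
    - by rewrite nnegrE.
  rewrite S_rec // uNrec.
  rewrite uNrec in Ha.
  have H' : ((sg y + \sum_(z <- ls y) Ptr mu y z * uN N z) `^ s <=
     s * (u y `^ (s - 1) * sg y) + \sum_(z <- ls y) Ptr mu y z * uN N z `^ s)%R.
    apply: le_trans H _; rewrite lerD2r.
    by apply: (ler_wpM2l (ltW s0)); apply: (ler_wpM2r (sg0 y)).
  apply: le_trans (_ : (_ <= (s * (u y `^ (s - 1) * sg y) +
      \sum_(z <- ls y) Ptr mu y z * uN N z `^ s)%:E)) _.
    by rewrite lee_fin.
  rewrite ge0_muleDr ?F0 //; last first.
    by apply: sume_ge0 => z _; rewrite mule_ge0 // ?lee_fin ?Ptr_ge0 ?S_ge0.
  rewrite EFinD EFinM; apply: leeD => //.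
  rewrite -sumEFin ge0_sume_distrr; last first.
    by move=> z _; rewrite mule_ge0 // ?lee_fin ?Ptr_ge0 ?S_ge0.
  apply: lee_sum => z _.
  rewrite EFinM muleCA; apply: lee_wpmul2l; first by rewrite lee_fin Ptr_ge0.
  exact: IH.
have GF : Gop mu (fun y => ((fine (Gop mu sigma y)) `^ (s - 1) * sigma y)%R) x =
    \esum_(n in [set: nat]) A n F x.
  rewrite GopE; last by move=> y; rewrite mulr_ge0 // powR_ge0.
  apply: eq_esum => n _; congr (A n _ x); apply/funext => y.
  by rewrite /F /sg mulrA.
rewrite GF.
set T := s%:E * _.
have T0 : 0 <= T.
  apply: mule_ge0; first by rewrite lee_fin ltW.
  by rewrite esum_ge0 // => n _; apply: A_ge0.
have hN N : ((uN N x) `^ s)%:E <= T.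
  apply: le_trans (claim N x) _; apply: lee_wpmul2l; first by rewrite lee_fin ltW.
  by apply: esum_nat_ge => n; apply: A_ge0.
have [->|TnI] := eqVneq T +oo; first exact: leey.
have Tfin : T \is a fin_num by rewrite ge0_fin_numE // ltey.
set t := fine T.
have tE : t%:E = T by rewrite fineK.
have t0 : (0 <= t)%R by rewrite -lee_fin tE.
have hR N : (uN N x <= t `^ s^-1)%R.
  have hN' : ((uN N x) `^ s <= t)%R by rewrite -lee_fin tE.
  have := @ge0_ler_powR R (s^-1) _ _ _ _ _ hN'.
  rewrite -powRrM mulfV ?gt_eqF // powRr1 //; apply.
  - by rewrite invr_ge0 ltW.
  - by rewrite nnegrE powR_ge0.
  - by rewrite nnegrE.
have hG : Gop mu sigma x <= (t `^ s^-1)%:E.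
  rewrite GE; apply: esum_nat_le => //; first by move=> n; apply: A_ge0.
  by move=> N; rewrite -/(S sgE N x) -uNE lee_fin.
have hu : (u x <= t `^ s^-1)%R by rewrite -lee_fin uE.
rewrite -tE lee_fin.
have := @ge0_ler_powR R s _ _ _ _ _ hu.
rewrite -powRrM mulVf ?gt_eqF // powRr1 //; apply.
- by rewrite ltW.
- by rewrite nnegrE.
- by rewrite nnegrE powR_ge0.
Qed.
End G.

Theorem lemma4p1 (R : realType) (V : choiceType) (mu : V -> V -> R)
  (hgraph : is_weighted_graph mu) (hinf : infinite_graph V)
  (hconn : connected_graph mu) (hlf : locally_finite mu)
  (s : R) (hs : 1 < s) (sigma : V -> R) (hsig : forall x, 0 <= sigma x)
  (hfin : forall x, (Gop mu sigma x < +oo)%E) :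
  forall x : V,
    (((fine (Gop mu sigma x)) `^ s)%R%:E
     <= s%:E * Gop mu (fun y => ((fine (Gop mu sigma y)) `^ (s - 1) * sigma y)%R) x)%E.
Proof.
move=> x; exact: (@main_ineq R V mu hgraph hlf s hs sigma hsig hfin x).
Qed.
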